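(* Let $\mathbb{E}$ be a finitely complete category endowed with a fibrational class $\Sigma$ of split epimorphisms. (1) If $\mathbb{E}$ is $\Sigma$-protomodular, then it is a $\Sigma$-Mal'tsev category. (2) If in addition $\Sigma$ is point-congruous, then for every morphism $y\colon Y'\to Y$ the base-change functor $y^*\colon\Sigma_Y(\mathbb{E})\to\Sigma_{Y'}(\mathbb{E})$ (pullback along $y$) is conservative.
   Context: A split epimorphism is a pair $(f,s)$ with $fs=1$. A class $\Sigma$ of split epimorphisms is fibrational if it contains all split epimorphisms $(f,s)$ with $f$ invertible and is stable under pullback along any morphism; it is point-congruous if moreover the full subcategory $\Sigma(\mathbb{E})$ of the category $\mathrm{Pt}(\mathbb{E})$ of split epimorphisms (with commuting squares as morphisms) is closed under finite limits in $\mathrm{Pt}(\mathbb{E})$. $\Sigma_Y(\mathbb{E})$ is the category of split epimorphisms in $\Sigma$ with codomain $Y$ and morphisms commuting with the epimorphisms and the splittings. A pair of morphisms with common codomain $Z$ is jointly extremally epic if it factors jointly through no non-invertible monomorphism into $Z$. $\mathbb{E}$ is $\Sigma$-Mal'tsev if for every split epimorphism $(f,s)\colon X\rightleftarrows Y$ in $\Sigma$ and every split epimorphism $(g,t)$ with $g\colon Y'\to Y$, letting $X'=Y'\times_YX$, $s'=(1_{Y'},sg)$, $\bar t=(tf,1_X)$, the pair $(s',\bar t)$ is jointly extremally epic. A split epimorphism $(f,s)\colon X\rightleftarrows Y$ is strongly split when for every morphism $y\colon\bar Y\to Y$, with $x\colon\bar Y\times_YX\to X$ the pullback projection, the pair $(x,s)$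 is jointly extremally epic. $\mathbb{E}$ is $\Sigma$-protomodular when every split epimorphism in $\Sigma$ is strongly split. *)

(* Defs.v *)
From Stdlib Require Import ProofIrrelevance.

Set Implicit Arguments.

Record Category := {
  Ob :> Type;
  Hom : Ob -> Ob -> Type;
  idm : forall a : Ob, Hom a a;
  comp : forall a b c : Ob, Hom b c -> Hom a b -> Hom a c;
  comp_assoc : forall (a b c d : Ob) (h : Hom c d) (g : Hom b c) (f : Hom a b),
      comp h (comp g f) = comp (comp h g) f;
  comp_id_l : forall (a b : Ob) (f : Hom a b), comp (idm b) f = f;
  comp_id_r : forall (a b : Ob) (f : Hom a b), comp f (idm a) = f
}.

Arguments Hom {c} a b : rename.
Arguments idm {c} a : rename.
Arguments comp {c a b c0} g f : rename.

Infix "∘" := comp (at level 40, left associativity).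

Definition mono {C : Category} {a b : C} (m : Hom a b) : Prop :=
  forall (z : C) (g h : Hom z a), m ∘ g = m ∘ h -> g = h.

Definition iso {C : Category} {a b : C} (f : Hom a b) : Prop :=
  exists g : Hom b a, g ∘ f = idm a /\ f ∘ g = idm b.

Definition is_terminal {C : Category} (T : C) : Prop :=
  forall A : C, exists! h : Hom A T, True.

Definition is_pullback {C : Category} {A B Z P : C}
    (f : Hom A Z) (g : Hom B Z) (p1 : Hom P A) (p2 : Hom P B) : Prop :=
  f ∘ p1 = g ∘ p2 /\
  forall (Q : C) (q1 : Hom Q A) (q2 : Hom Q B), f ∘ q1 = g ∘ q2 ->
    exists! u : Hom Q P, p1 ∘ u = q1 /\ p2 ∘ u = q2.

Definition is_product {C : Category} {A B P : C}
    (p1 : Hom P A) (p2 : Hom P B) : Prop :=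
  forall (Q : C) (q1 : Hom Q A) (q2 : Hom Q B),
    exists! u : Hom Q P, p1 ∘ u = q1 /\ p2 ∘ u = q2.

Definition is_equalizer {C : Category} {A B E : C}
    (f g : Hom A B) (e : Hom E A) : Prop :=
  f ∘ e = g ∘ e /\
  forall (Q : C) (q : Hom Q A), f ∘ q = g ∘ q ->
    exists! u : Hom Q E, e ∘ u = q.

Definition finitely_complete (C : Category) : Prop :=
  (exists T : C, is_terminal T) /\
  forall (A B Z : C) (f : Hom A Z) (g : Hom B Z),
    exists (P : C) (p1 : Hom P A) (p2 : Hom P B), is_pullback f g p1 p2.

Definition jointly_extremally_epic {C : Category} {A B Z : C}
    (a : Hom A Z) (b : Hom B Z) : Prop :=
  forall (M : C) (m : Hom M Z) (a' : Hom A M) (b' : Hom B M),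
    mono m -> m ∘ a' = a -> m ∘ b' = b -> iso m.

Record PtOb (C : Category) := {
  pt_X : C;
  pt_Y : C;
  pt_f : Hom pt_X pt_Y;
  pt_s : Hom pt_Y pt_X;
  pt_fs : pt_f ∘ pt_s = idm pt_Y
}.

Record PtHom (C : Category) (A B : PtOb C) := {
  ph_x : Hom (pt_X A) (pt_X B);
  ph_y : Hom (pt_Y A) (pt_Y B);
  ph_f : pt_f B ∘ ph_x = ph_y ∘ pt_f A;
  ph_s : ph_x ∘ pt_s A = pt_s B ∘ ph_y
}.

Lemma PtHom_ext (C : Category) (A B : PtOb C) (u v : PtHom A B) :
  ph_x u = ph_x v -> ph_y u = ph_y v -> u = v.
Proof.
  destruct u as [ux uy uf us], v as [vx vy vf vs]; simpl; intros -> ->.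
  rewrite (proof_irrelevance _ uf vf), (proof_irrelevance _ us vs); reflexivity.
Qed.

Definition pt_id (C : Category) (A : PtOb C) : PtHom A A.
Proof.
  refine {| ph_x := idm (pt_X A); ph_y := idm (pt_Y A) |}.
  - now rewrite comp_id_l, comp_id_r.
  - now rewrite comp_id_l, comp_id_r.
Defined.

Definition pt_comp (C : Category) (A B D : PtOb C)
    (v : PtHom B D) (u : PtHom A B) : PtHom A D.
Proof.
  refine {| ph_x := ph_x v ∘ ph_x u; ph_y := ph_y v ∘ ph_y u |}.
  - rewrite comp_assoc, (ph_f v), <- comp_assoc, (ph_f u), comp_assoc.
    reflexivity.
  - rewrite <- comp_assoc, (ph_s u), comp_assoc, (ph_s v), <- comp_assoc.
    reflexivity.
Defined.

Definition Pt (C : Category) : Category.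
Proof.
  refine {| Ob := PtOb C; Hom := @PtHom C; idm := @pt_id C;
            comp := @pt_comp C |}.
  - intros; apply PtHom_ext; simpl; apply comp_assoc.
  - intros; apply PtHom_ext; simpl; apply comp_id_l.
  - intros; apply PtHom_ext; simpl; apply comp_id_r.
Defined.

(* A class Σ of split epimorphisms: a predicate on pairs (f, s), f : X -> Y,
   s : Y -> X, all of whose members satisfy f s = 1. *)
Definition SplitClass (C : Category) : Type :=
  forall X Y : C, Hom X Y -> Hom Y X -> Prop.

Definition in_class {C : Category} (Sig : SplitClass C) (A : PtOb C) : Prop :=
  Sig (pt_X A) (pt_Y A) (pt_f A) (pt_s A).

Definition fibrational {C : Category} (Sig : SplitClass C) : Prop :=
  (forall (X Y : C) (f : Hom X Y) (s : Hom Y X), Sig X Y f s -> f ∘ s = idm Y) /\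
  (forall (X Y : C) (f : Hom X Y) (s : Hom Y X),
      f ∘ s = idm Y -> iso f -> Sig X Y f s) /\
  (forall (X Y : C) (f : Hom X Y) (s : Hom Y X) (Y' : C) (y : Hom Y' Y)
          (X' : C) (f' : Hom X' Y') (x : Hom X' X) (s' : Hom Y' X'),
      Sig X Y f s -> is_pullback y f f' x ->
      f' ∘ s' = idm Y' -> x ∘ s' = s ∘ y -> Sig X' Y' f' s').

Definition closed_under_finite_limits_in_Pt {C : Category} (Sig : SplitClass C)
    : Prop :=
  (forall T : Pt C, is_terminal T -> in_class Sig T) /\
  (forall (A B P : Pt C) (p1 : Hom P A) (p2 : Hom P B),
      in_class Sig A -> in_class Sig B -> is_product p1 p2 -> in_class Sig P) /\
  (forall (A B E : Pt C) (f g : Hom A B) (e : Hom E A),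
      in_class Sig A -> in_class Sig B -> is_equalizer f g e -> in_class Sig E) /\
  (forall (A B Z P : Pt C) (f : Hom A Z) (g : Hom B Z)
          (p1 : Hom P A) (p2 : Hom P B),
      in_class Sig A -> in_class Sig B -> in_class Sig Z ->
      is_pullback f g p1 p2 -> in_class Sig P).

Definition point_congruous {C : Category} (Sig : SplitClass C) : Prop :=
  fibrational Sig /\ closed_under_finite_limits_in_Pt Sig.

Definition Sigma_Maltsev {C : Category} (Sig : SplitClass C) : Prop :=
  forall (X Y : C) (f : Hom X Y) (s : Hom Y X), Sig X Y f s ->
  forall (Y' : C) (g : Hom Y' Y) (t : Hom Y Y'), g ∘ t = idm Y ->
  forall (X' : C) (p1 : Hom X' Y') (p2 : Hom X' X), is_pullback g f p1 p2 ->
  forall (s' : Hom Y' X') (tb : Hom X X'),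
    p1 ∘ s' = idm Y' -> p2 ∘ s' = s ∘ g ->
    p1 ∘ tb = t ∘ f -> p2 ∘ tb = idm X ->
    jointly_extremally_epic s' tb.

Definition strongly_split {C : Category} {X Y : C} (f : Hom X Y) (s : Hom Y X)
    : Prop :=
  forall (Yb : C) (y : Hom Yb Y) (P : C) (p : Hom P Yb) (x : Hom P X),
    is_pullback y f p x -> jointly_extremally_epic x s.

Definition Sigma_protomodular {C : Category} (Sig : SplitClass C) : Prop :=
  forall (X Y : C) (f : Hom X Y) (s : Hom Y X), Sig X Y f s -> strongly_split f s.

(* morphism (X1, f1, s1) -> (X2, f2, s2) of Pt_Y(E) (hence of Σ_Y(E), a full
   subcategory): h with f2 h = f1 and h s1 = s2 *)
Definition fib_hom {C : Category} {Y X1 X2 : C}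
    (f1 : Hom X1 Y) (s1 : Hom Y X1) (f2 : Hom X2 Y) (s2 : Hom Y X2)
    (h : Hom X1 X2) : Prop :=
  f2 ∘ h = f1 /\ h ∘ s1 = s2.

Definition fib_iso {C : Category} {Y X1 X2 : C}
    (f1 : Hom X1 Y) (s1 : Hom Y X1) (f2 : Hom X2 Y) (s2 : Hom Y X2)
    (h : Hom X1 X2) : Prop :=
  fib_hom f1 s1 f2 s2 h /\
  exists k : Hom X2 X1, fib_hom f2 s2 f1 s1 k /\
    k ∘ h = idm X1 /\ h ∘ k = idm X2.

(* For every y : Y' -> Y the base-change functor y^* : Σ_Y(E) -> Σ_{Y'}(E)
   reflects isomorphisms.  y^* is described up to the choice of pullbacks:
   y^*(X1,f1,s1) = (P1, q1, t1) with P1 = Y' x_Y X1, t1 = (1, s1 y), and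
   y^*(h) = k the induced map P1 -> P2. *)
Definition base_change_conservative {C : Category} (Sig : SplitClass C) : Prop :=
  forall (Y' Y : C) (y : Hom Y' Y)
         (X1 : C) (f1 : Hom X1 Y) (s1 : Hom Y X1)
         (X2 : C) (f2 : Hom X2 Y) (s2 : Hom Y X2) (h : Hom X1 X2),
    Sig X1 Y f1 s1 -> Sig X2 Y f2 s2 -> fib_hom f1 s1 f2 s2 h ->
  forall (P1 : C) (q1 : Hom P1 Y') (x1 : Hom P1 X1) (t1 : Hom Y' P1),
    is_pullback y f1 q1 x1 -> q1 ∘ t1 = idm Y' -> x1 ∘ t1 = s1 ∘ y ->
  forall (P2 : C) (q2 : Hom P2 Y') (x2 : Hom P2 X2) (t2 : Hom Y' P2),
    is_pullback y f2 q2 x2 -> q2 ∘ t2 = idm Y' -> x2 ∘ t2 = s2 ∘ y ->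
  forall k : Hom P1 P2, q2 ∘ k = q1 -> x2 ∘ k = h ∘ x1 ->
    fib_iso q1 t1 q2 t2 k -> fib_iso f1 s1 f2 s2 h.

(* Main.v *)
Require Import Defs.

Section H.
Context {C : Category}.

Lemma pb_uniq {A B Z P Q : C} (f : Hom A Z) (g : Hom B Z) (p1 : Hom P A) (p2 : Hom P B)
  (u v : Hom Q P) : is_pullback f g p1 p2 -> p1 ∘ u = p1 ∘ v -> p2 ∘ u = p2 ∘ v -> u = v.
Proof.
  intros [Hc Hu] E1 E2.
  destruct (Hu Q (p1 ∘ v) (p2 ∘ v)) as [w [_ Hw]].
  { rewrite !comp_assoc, Hc; reflexivity. }
  rewrite <- (Hw u (conj E1 E2)). apply Hw. split; reflexivity.
Qed.

Lemma jee_sym {A B Z : C} (a : Hom A Z) (b : Hom B Z) :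
  jointly_extremally_epic a b -> jointly_extremally_epic b a.
Proof. intros H M m a' b' Hm E1 E2. eapply H; eauto. Qed.

Lemma iso_mono {A B : C} (m : Hom A B) : iso m -> mono m.
Proof.
  intros [g [Hg1 Hg2]] Z u v E.
  rewrite <- (comp_id_l _ _ _ u), <- (comp_id_l _ _ _ v), <- Hg1, <- !comp_assoc, E; reflexivity.
Qed.

End H.

Lemma part1 (C : Category) (Sig : SplitClass C) :
  fibrational Sig -> Sigma_protomodular Sig -> Sigma_Maltsev Sig.
Proof.
  intros [Hsplit [Hiso Hstab]] Hpm X Y f s Hs Y' g t Hgt X' p1 p2 Hpb s' tb H1 H2 H3 H4.
  assert (HS : Sig X' Y' p1 s') by (eapply Hstab; eauto).
  apply jee_sym.
  apply (Hpm _ _ _ _ HS Y t X f tb).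
  split; [now rewrite H3|].
  intros Q q1 q2 Eq.
  assert (E2 : tb ∘ (p2 ∘ q2) = q2).
  { apply (pb_uniq g f p1 p2 _ _ Hpb).
    - rewrite comp_assoc, H3, <- comp_assoc.
      rewrite (comp_assoc _ _ _ _ _ f p2 q2), <- (proj1 Hpb), <- comp_assoc, <- Eq.
      rewrite (comp_assoc _ _ _ _ _ g t q1), Hgt, comp_id_l. reflexivity.
    - rewrite comp_assoc, H4, comp_id_l; reflexivity. }
  exists (p2 ∘ q2). split.
  - split; [|exact E2].
    rewrite comp_assoc, <- (proj1 Hpb), <- comp_assoc, <- Eq, comp_assoc, Hgt, comp_id_l.
    reflexivity.
  - intros u [_ Eu]. rewrite <- Eu, comp_assoc, H4, comp_id_l. reflexivity.
Qed.

Lemma part2 (C : Category) (Sig : SplitClass C) :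
  finitely_complete C -> fibrational Sig ->
  Sigma_protomodular Sig -> point_congruous Sig -> base_change_conservative Sig.
Proof.
  intros [_ Hpbex] [Hsplit _] Hpm [_ [_ [_ [_ Hclos]]]]
    Y' Y y X1 f1 s1 X2 f2 s2 h HS1 HS2 [Hf Hs] P1 q1 x1 t1 Hp1 Ht1 Hx1
    P2 q2 x2 t2 Hp2 Ht2 Hx2 k Hk1 Hk2 [_ [ki [_ [Hki1 Hki2]]]].
  destruct (Hpbex X1 X1 X2 h h) as [R [r1 [r2 HR]]].
  destruct (proj2 HR Y s1 s1 eq_refl) as [sR [[HsR1 HsR2] _]].
  destruct (proj2 HR X1 (idm X1) (idm X1) eq_refl) as [d [[Hd1 Hd2] _]].
  assert (Hfs1 : f1 ∘ s1 = idm Y) by (apply Hsplit; exact HS1).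
  assert (Hfs2 : f2 ∘ s2 = idm Y) by (apply Hsplit; exact HS2).
  assert (Hfr : f1 ∘ r2 = f1 ∘ r1).
  { rewrite <- Hf, <- !comp_assoc, (proj1 HR). reflexivity. }
  assert (HfsR : (f1 ∘ r1) ∘ sR = idm Y).
  { rewrite <- comp_assoc, HsR1; exact Hfs1. }
  assert (HSR : Sig R Y (f1 ∘ r1) sR).
  { set (A := @Build_PtOb C X1 Y f1 s1 Hfs1).
    set (Z := @Build_PtOb C X2 Y f2 s2 Hfs2).
    set (PR := @Build_PtOb C R Y (f1 ∘ r1) sR HfsR).
    assert (hf : f2 ∘ h = idm Y ∘ f1) by (rewrite comp_id_l; exact Hf).
    assert (hs : h ∘ s1 = s2 ∘ idm Y) by (rewrite comp_id_r; exact Hs).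
    set (hh := Build_PtHom A Z h (idm Y) hf hs).
    assert (p1f : f1 ∘ r1 = idm Y ∘ (f1 ∘ r1)) by (rewrite comp_id_l; reflexivity).
    assert (p1s : r1 ∘ sR = s1 ∘ idm Y) by (rewrite comp_id_r; exact HsR1).
    assert (p2f : f1 ∘ r2 = idm Y ∘ (f1 ∘ r1)) by (rewrite comp_id_l; exact Hfr).
    assert (p2s : r2 ∘ sR = s1 ∘ idm Y) by (rewrite comp_id_r; exact HsR2).
    set (pr1 := Build_PtHom PR A r1 (idm Y) p1f p1s).
    set (pr2 := Build_PtHom PR A r2 (idm Y) p2f p2s).
    apply (Hclos A A Z PR hh hh pr1 pr2 HS1 HS1 HS2).
    split.
    - apply PtHom_ext; simpl; [exact (proj1 HR)|reflexivity].
    - intros Q u1 u2 E.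
      assert (Ex : h ∘ ph_x u1 = h ∘ ph_x u2) by exact (f_equal (@ph_x C Q Z) E).
      assert (Ey : ph_y u1 = ph_y u2).
      { pose proof (f_equal (@ph_y C Q Z) E) as E'. simpl in E'.
        rewrite !comp_id_l in E'. exact E'. }
      destruct (proj2 HR _ _ _ Ex) as [w [[Hw1 Hw2] Hwu]].
      assert (wf : (f1 ∘ r1) ∘ w = ph_y u1 ∘ pt_f Q).
      { rewrite <- comp_assoc, Hw1. exact (ph_f u1). }
      assert (ws : w ∘ pt_s Q = sR ∘ ph_y u1).
      { apply (pb_uniq h h r1 r2 _ _ HR).
        - rewrite !comp_assoc, Hw1, HsR1. exact (ph_s u1).
        - rewrite !comp_assoc, Hw2, HsR2, Ey. exact (ph_s u2). }
      exists (@Build_PtHom C Q PR w (ph_y u1) wf ws).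
      split.
      + split; apply PtHom_ext; simpl.
        * exact Hw1.
        * apply comp_id_l.
        * exact Hw2.
        * rewrite comp_id_l; exact Ey.
      + intros v [F1 F2].
        assert (G1 := f_equal (@ph_x C Q A) F1). simpl in G1.
        assert (G2 := f_equal (@ph_x C Q A) F2). simpl in G2.
        assert (G3 := f_equal (@ph_y C Q A) F1). simpl in G3.
        rewrite comp_id_l in G3.
        apply PtHom_ext; simpl; [|symmetry; exact G3].
        apply (pb_uniq h h r1 r2 _ _ HR); [rewrite Hw1, G1; reflexivity|rewrite Hw2, G2; reflexivity]. }
  destruct (Hpbex Y' R Y y (f1 ∘ r1)) as [PR [qR [xR HPR]]].
  pose proof (Hpm R Y (f1 ∘ r1) sR HSR Y' y PR qR xR HPR) as Hjee.
  assert (E1 : y ∘ qR = f1 ∘ (r1 ∘ xR)).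
  { rewrite (proj1 HPR). symmetry; apply comp_assoc. }
  assert (E2 : y ∘ qR = f1 ∘ (r2 ∘ xR)).
  { rewrite E1, !comp_assoc, Hfr. reflexivity. }
  destruct (proj2 Hp1 PR qR (r1 ∘ xR) E1) as [m1 [[Hm1 Hm1'] _]].
  destruct (proj2 Hp1 PR qR (r2 ∘ xR) E2) as [m2 [[Hm2 Hm2'] _]].
  assert (Ekm : k ∘ m1 = k ∘ m2).
  { apply (pb_uniq y f2 q2 x2 _ _ Hp2).
    - rewrite !comp_assoc, Hk1, Hm1, Hm2. reflexivity.
    - rewrite !comp_assoc, Hk2, <- !comp_assoc, Hm1', Hm2', !comp_assoc, (proj1 HR).
      reflexivity. }
  assert (Em : m1 = m2).
  { rewrite <- (comp_id_l _ _ _ m1), <- (comp_id_l _ _ _ m2), <- Hki1, <- !comp_assoc, Ekm.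
    reflexivity. }
  assert (Er : r1 ∘ xR = r2 ∘ xR) by (rewrite <- Hm1', <- Hm2', Em; reflexivity).
  assert (HxR : d ∘ (r1 ∘ xR) = xR).
  { apply (pb_uniq h h r1 r2 _ _ HR).
    - rewrite comp_assoc, Hd1, comp_id_l. reflexivity.
    - rewrite comp_assoc, Hd2, comp_id_l. exact Er. }
  assert (HsRd : d ∘ s1 = sR).
  { apply (pb_uniq h h r1 r2 _ _ HR).
    - rewrite comp_assoc, Hd1, comp_id_l. symmetry; exact HsR1.
    - rewrite comp_assoc, Hd2, comp_id_l. symmetry; exact HsR2. }
  assert (Hdmono : mono d).
  { intros Z a b E. rewrite <- (comp_id_l _ _ _ a), <- (comp_id_l _ _ _ b), <- Hd1,
      <- !comp_assoc, E. reflexivity. }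
  destruct (Hjee X1 d (r1 ∘ xR) s1 Hdmono HxR HsRd) as [e [He1 He2]].
  assert (Hhmono : mono h).
  { intros Z a b E. destruct (proj2 HR Z a b E) as [v [[Hv1 Hv2] _]].
    assert (Hv : d ∘ (e ∘ v) = v) by (rewrite comp_assoc, He2, comp_id_l; reflexivity).
    rewrite <- Hv1, <- Hv2, <- Hv, !comp_assoc, Hd1, Hd2. reflexivity. }
  pose proof (Hpm X2 Y f2 s2 HS2 Y' y P2 q2 x2 Hp2) as Hjee2.
  assert (Ex : h ∘ (x1 ∘ ki) = x2).
  { rewrite comp_assoc, <- Hk2, <- comp_assoc, Hki2, comp_id_r. reflexivity. }
  destruct (Hjee2 X1 h (x1 ∘ ki) s1 Hhmono Ex Hs) as [g [Hg1 Hg2]].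
  split; [split; assumption|].
  exists g. split; [split|split; assumption].
  - rewrite <- Hf, <- comp_assoc, Hg2, comp_id_r. reflexivity.
  - rewrite <- Hs, comp_assoc, Hg1, comp_id_l. reflexivity.
Qed.

Theorem theorem8p4 (C : Category) (Sig : SplitClass C) :
  finitely_complete C -> fibrational Sig ->
  (Sigma_protomodular Sig -> Sigma_Maltsev Sig) /\
  (Sigma_protomodular Sig -> point_congruous Sig -> base_change_conservative Sig).
Proof.
  intros Hfc Hfib. split.
  - apply part1; exact Hfib.
  - apply part2; assumption.
Qed.
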